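(* Suppose $R=0$ and $f$ satisfies the Polyak–Łojasiewicz condition with constant $\mu>0$: $\|\nabla f(x)\|^2\ge2\mu(f(x)-f^\star)$ for all $x$, with $f^\star=f(x^\star)$ for a minimizer $x^\star$ of $f$. In DIANA (i.e., EF-BV with $\nu=1$) with compressors in $\mathbb{C}(\eta,\omega)$, suppose $\lambda\in(0,1]$ is such that $r<1$, and $$0<\gamma\le\frac{1}{L+\tilde L\sqrt{\frac{r_{\mathrm{av}}}{r}}\frac1{s^\star}}.$$ For $t\ge0$ let $\Psi^t=f(x^t)-f^\star+\frac{\gamma}{2\theta^\star}\frac1n\sum_{i=1}^n\|\nabla f_i(x^t)-h_i^t\|^2$. Then for every $t\ge0$, $\mathbb{E}[\Psi^t]\le\big(\max(1-\gamma\mu,\frac{r+1}{2})\big)^t\Psi^0$.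
   Context: $f=\frac1n\sum_if_i$, each $f_i:\mathbb{R}^d\to\mathbb{R}$ convex and $L_i$-smooth; $\tilde L=\sqrt{\frac1n\sum_iL_i^2}$; $f$ is $L$-smooth with $L\le\tilde L$. For $\eta\in[0,1)$, $\omega\ge0$, $\mathbb{C}(\eta,\omega)$ is the class of randomized operators $\mathcal{C}:\mathbb{R}^d\to\mathbb{R}^d$ with $\|\mathbb{E}[\mathcal{C}(x)]-x\|\le\eta\|x\|$ and $\mathbb{E}\|\mathcal{C}(x)-\mathbb{E}[\mathcal{C}(x)]\|^2\le\omega\|x\|^2$ for all $x$. Compressors $\mathcal{C}_i^t$ all lie in $\mathbb{C}(\eta,\omega)$, those at iteration $t$ are independent of previous randomness, and $\omega_{\mathrm{av}}\in[0,\omega]$ satisfies $\mathbb{E}\|\frac1n\sum_i(\mathcal{C}_i^t(x_i)-\mathbb{E}[\mathcal{C}_i^t(x_i)])\|^2\le\frac{\omega_{\mathrm{av}}}{n}\sum_i\|x_i\|^2$ for all $t$ and $x_1,\dots,x_n$. DIANA: given $x^0,h_1^0,\dots,h_n^0$, $\gamma>0$, $\lambda\in(0,1]$, $h^0=\frac1n\sum_ih_i^0$; for $t\ge0$: $d_i^t=\mathcal{C}_i^t(\nabla f_i(x^t)-h_i^t)$, $h_i^{t+1}=h_i^t+\lambda d_i^t$, $d^t=\frac1n\sum_id_i^t$, $h^{t+1}=h^t+\lambda d^t$, $g^{t+1}=h^t+d^t$, $x^{t+1}=x^t-\gamma g^{t+1}$ (here $R=0$). Constants: $r=(1-\lambda+\lambda\eta)^2+\lambda^2\omega$,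 $r_{\mathrm{av}}=\eta^2+\omega_{\mathrm{av}}$, $s^\star=\sqrt{\frac{1+r}{2r}}-1$, $\theta^\star=s^\star(1+s^\star)\frac{r}{r_{\mathrm{av}}}$ (with $r>0$, $r_{\mathrm{av}}>0$). *)

(* Defs.v *)
From HB Require Import structures.
From mathcomp Require Import all_boot all_order all_algebra.
From mathcomp Require Import all_classical all_reals all_analysis.
Set Implicit Arguments. Unset Strict Implicit. Unset Printing Implicit Defensive.
Import Order.TTheory GRing.Theory Num.Theory.
Import numFieldNormedType.Exports.
Local Open Scope ring_scope.

Definition dotv (R : realType) (d : nat) (u v : 'rV[R]_d) : R :=
  \sum_(j < d) u ord0 j * v ord0 j.
Definition sqnorm (R : realType) (d : nat) (u : 'rV[R]_d) : R := dotv u u.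
Definition enorm (R : realType) (d : nat) (u : 'rV[R]_d) : R :=
  Num.sqrt (sqnorm u).

Definition convex_fun (R : realType) (d : nat) (f : 'rV[R]_d -> R) : Prop :=
  forall (x y : 'rV[R]_d) (a : R), 0 <= a -> a <= 1 ->
    f (a *: x + (1 - a) *: y) <= a * f x + (1 - a) * f y.

Definition has_gradient (R : realType) (d : nat)
  (f : 'rV[R]_d -> R) (g : 'rV[R]_d -> 'rV[R]_d) : Prop :=
  forall x v : 'rV[R]_d, is_derive x v f (dotv (g x) v).

Definition smooth_with (R : realType) (d : nat)
  (f : 'rV[R]_d -> R) (g : 'rV[R]_d -> 'rV[R]_d) (L : R) : Prop :=
  has_gradient f g /\
  forall x y : 'rV[R]_d, enorm (g x - g y) <= L * enorm (x - y).

(* A randomized operator is modelled as C : T -> R^d -> R^d, where the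
   randomness xi : T is drawn from the probability P. *)
Definition Emean (dT : measure_display) (T : measurableType dT) (R : realType)
  (d : nat) (P : probability T R) (C : T -> 'rV[R]_d -> 'rV[R]_d)
  (x : 'rV[R]_d) : 'rV[R]_d :=
  \row_(j < d) Rintegral P setT (fun xi => C xi x ord0 j).

Definition in_class (dT : measure_display) (T : measurableType dT)
  (R : realType) (d : nat) (P : probability T R)
  (C : T -> 'rV[R]_d -> 'rV[R]_d) (eta omega : R) : Prop :=
  forall x : 'rV[R]_d,
    (forall j : 'I_d, P.-integrable setT (fun xi => (C xi x ord0 j)%:E)) /\
    enorm (Emean P C x - x) <= eta * enorm x /\
    (\int[P]_xi (sqnorm (C xi x - Emean P C x))%:E <= (omega * sqnorm x)%:E)%E.

Definition upd (T : Type) (s : nat -> T) (k : nat) (xi : T) : nat -> T :=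
  fun m => if m == k then xi else s m.

(* The compressors of iteration t are
   C i t (s t) where s t is the seed of iteration t, drawn from P t
   independently across iterations.  State = (x^t, (h_i^t)_i, h^t). *)
Fixpoint diana (T : Type) (R : realType) (d n : nat)
  (gf : 'I_n -> 'rV[R]_d -> 'rV[R]_d)
  (C : 'I_n -> nat -> T -> 'rV[R]_d -> 'rV[R]_d)
  (gamma lambda : R) (x0 : 'rV[R]_d) (h0 : 'I_n -> 'rV[R]_d)
  (s : nat -> T) (t : nat) : 'rV[R]_d * ('I_n -> 'rV[R]_d) * 'rV[R]_d :=
  match t with
  | 0 => (x0, h0, n%:R^-1 *: \sum_(i < n) h0 i)
  | t'.+1 =>
    let: (x, h, hb) := diana gf C gamma lambda x0 h0 s t' in
    let dd := fun i : 'I_n => C i t' (s t') (gf i x - h i) in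
    let db := n%:R^-1 *: \sum_(i < n) dd i in
    (x - gamma *: (hb + db), (fun i => h i + lambda *: dd i), hb + lambda *: db)
  end.

(* Expectation over the seeds of iterations 0, ..., k-1 (product of the
   probabilities P 0, ..., P (k-1), as iterated integrals; the seed of the
   latest iteration is integrated innermost).  Seeds with index >= k are
   taken from s. *)
Fixpoint iexp (dT : measure_display) (T : measurableType dT) (R : realType)
  (P : nat -> probability T R) (k : nat) (F : (nat -> T) -> \bar R)
  (s : nat -> T) : \bar R :=
  match k with
  | 0 => F s
  | k'.+1 => iexp P k' (fun s' => (\int[P k']_xi F (upd s' k' xi))%E) s
  end.

(* Main.v *)
Require Import Defs.
From HB Require Import structures.
From mathcomp Require Import all_boot all_order all_algebra.
From mathcomp Require Import all_classical all_reals all_analysis.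
From mathcomp Require Import ring lra.
Import Order.TTheory GRing.Theory Num.Theory.
Import numFieldNormedType.Exports.
Set Implicit Arguments. Unset Strict Implicit. Unset Printing Implicit Defensive.
Local Open Scope ring_scope.
Section Vec.
Context (R : realType) (d : nat).
Implicit Types (u v w : 'rV[R]_d) (a : R).

Lemma dotvC u v : dotv u v = dotv v u.
Proof. by rewrite /dotv; apply: eq_bigr => j _; rewrite mulrC. Qed.
Lemma dotvDl u w v : dotv (u + w) v = dotv u v + dotv w v.
Proof. by rewrite /dotv -big_split; apply: eq_bigr => j _; rewrite mxE mulrDl. Qed.
Lemma dotvZl a u v : dotv (a *: u) v = a * dotv u v.
Proof. by rewrite /dotv mulr_sumr; apply: eq_bigr => j _; rewrite mxE mulrA. Qed.
Lemma dotvNl u v : dotv (- u) v = - dotv u v.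
Proof. by rewrite -scaleN1r dotvZl mulN1r. Qed.
Lemma dotvBl u w v : dotv (u - w) v = dotv u v - dotv w v.
Proof. by rewrite dotvDl dotvNl. Qed.
Lemma dotvDr u w v : dotv v (u + w) = dotv v u + dotv v w.
Proof. by rewrite dotvC dotvDl !(dotvC v). Qed.
Lemma dotvZr a u v : dotv v (a *: u) = a * dotv v u.
Proof. by rewrite dotvC dotvZl dotvC. Qed.
Lemma dotvNr u v : dotv v (- u) = - dotv v u.
Proof. by rewrite dotvC dotvNl dotvC. Qed.
Lemma dotvBr u w v : dotv v (u - w) = dotv v u - dotv v w.
Proof. by rewrite dotvDr dotvNr. Qed.
Lemma dotv0l v : dotv 0 v = 0.
Proof. by rewrite /dotv big1 // => j _; rewrite mxE mul0r. Qed.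
Lemma dotv_suml (I : finType) (F : I -> 'rV[R]_d) v :
  dotv (\sum_i F i) v = \sum_i dotv (F i) v.
Proof.
rewrite /dotv exchange_big /=; apply: eq_bigr => j _.
by rewrite summxE mulr_suml.
Qed.
Lemma sqnorm_ge0 u : 0 <= sqnorm u.
Proof. by rewrite /sqnorm /dotv sumr_ge0 // => j _; rewrite -expr2 sqr_ge0. Qed.
Lemma sqnormD u v : sqnorm (u + v) = sqnorm u + 2 * dotv u v + sqnorm v.
Proof. rewrite /sqnorm !dotvDl !dotvDr (dotvC v u); ring. Qed.
Lemma sqnormB u v : sqnorm (u - v) = sqnorm u - 2 * dotv u v + sqnorm v.
Proof. rewrite /sqnorm !dotvBl !dotvBr (dotvC v u); ring. Qed.
Lemma sqnormZ a u : sqnorm (a *: u) = a ^+ 2 * sqnorm u.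
Proof. rewrite /sqnorm dotvZl dotvZr; ring. Qed.
Lemma sqnormN u : sqnorm (- u) = sqnorm u.
Proof. by rewrite -scaleN1r sqnormZ sqrrN expr1n mul1r. Qed.
Lemma enorm_ge0 u : 0 <= enorm u.
Proof. exact: sqrtr_ge0. Qed.
Lemma enorm_sq u : enorm u ^+ 2 = sqnorm u.
Proof. by rewrite /enorm sqr_sqrtr // sqnorm_ge0. Qed.

Lemma dot_young u v s : 0 < s -> 2 * dotv u v <= s * sqnorm u + s^-1 * sqnorm v.
Proof.
move=> s0; have h := sqnorm_ge0 (s *: u - v).
rewrite sqnormB sqnormZ dotvZl in h.
have e : s * sqnorm u + s^-1 * sqnorm v - 2 * dotv u v =
   s^-1 * (s ^+ 2 * sqnorm u - 2 * (s * dotv u v) + sqnorm v).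
  by field; rewrite gt_eqF.
rewrite -subr_ge0 e mulr_ge0 // invr_ge0 ltW //.
Qed.

Lemma sqnorm0_dot u v : sqnorm u = 0 -> dotv u v = 0.
Proof.
rewrite /sqnorm /dotv => /eqP; rewrite psumr_eq0 => [/allP h|j _]; last by rewrite -expr2 sqr_ge0.
rewrite big1 // => j _.
have /eqP e0 := h j (mem_index_enum j); move: e0.
move=> e; have : u ord0 j == 0 by rewrite -sqrf_eq0 expr2 e.
by move=> /eqP ->; rewrite mul0r.
Qed.

Lemma CS u v : dotv u v <= enorm u * enorm v.
Proof.
have [u0|upos] := eqVneq (enorm u) 0.
  rewrite sqnorm0_dot ?u0 ?mul0r // -enorm_sq u0 expr0n //.
have [v0|vpos] := eqVneq (enorm v) 0.
  rewrite dotvC sqnorm0_dot ?v0 ?mulr0 // -enorm_sq v0 expr0n //.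
have nu : 0 < enorm u by rewrite lt_def upos enorm_ge0.
have nv : 0 < enorm v by rewrite lt_def vpos enorm_ge0.
have := @dot_young u v _ (divr_gt0 nv nu).
rewrite -!enorm_sq invf_div.
have -> : enorm v / enorm u * enorm u ^+ 2 + enorm u / enorm v * enorm v ^+ 2
   = 2 * (enorm u * enorm v) by field; rewrite ?gt_eqF.
by rewrite ler_pM2l.
Qed.

Lemma enormD u v : enorm (u + v) <= enorm u + enorm v.
Proof.
rewrite -(ler_pXn2r (isT : (0 < 2)%N)) ?nnegrE ?addr_ge0 ?enorm_ge0 //.
rewrite enorm_sq sqnormD -!enorm_sq; have := CS u v; nra.
Qed.

Lemma enormZ a u : enorm (a *: u) = `|a| * enorm u.
Proof. by rewrite /enorm sqnormZ sqrtrM ?sqr_ge0 // sqrtr_sqr. Qed.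

Lemma young u v s : 0 < s ->
  sqnorm (u + v) <= (1 + s) * sqnorm u + (1 + s^-1) * sqnorm v.
Proof. move=> s0; rewrite sqnormD; have := @dot_young u v s s0; lra. Qed.

Lemma jensen (n : nat) (F : 'I_n -> 'rV[R]_d) : (0 < n)%N ->
  sqnorm (n%:R^-1 *: \sum_i F i) <= n%:R^-1 * \sum_i sqnorm (F i).
Proof.
move=> n0; set m := n%:R^-1 *: \sum_i F i.
have hn : (n%:R : R) != 0 by rewrite pnatr_eq0 -lt0n.
have hS : \sum_i F i = n%:R *: m by rewrite /m scalerA divff // scale1r.
have : 0 <= \sum_i sqnorm (F i - m) by apply: sumr_ge0 => i _; exact: sqnorm_ge0.
under eq_bigr do rewrite sqnormB.
rewrite big_split big_split /= sumrN -mulr_sumr -dotv_suml hS dotvZl sumr_const card_ord -mulr_natr.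
have np : (0:R) < n%:R by rewrite ltr0n.
rewrite -mulr_natr -/(sqnorm m) => h.
have h2 : n%:R * sqnorm m <= \sum_(i < n) sqnorm (F i) by nra.
have -> : sqnorm m = n%:R^-1 * (n%:R * sqnorm m) by rewrite mulrA mulVf // mul1r.
by rewrite ler_wpM2l // invr_ge0 ltW.
Qed.
End Vec.


Section Descent.
Context (R : realType) (d : nat).
Lemma line_derive (f : 'rV[R]_d -> R) (g : 'rV[R]_d -> 'rV[R]_d) (x v : 'rV[R]_d) (t : R) :
  has_gradient f g ->
  is_derive t (1:R) (fun s : R => f (x + s *: v)) (dotv (g (x + t *: v)) v).
Proof.
move=> hg; have [hd hv] := hg (x + t *: v) v.
have e : (fun h : R => h^-1 *: (((fun s : R => f (x + s *: v)) \o shift t) (h *: 1) - f (x + t *: v)))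
  = (fun h : R => h^-1 *: ((f \o shift (x + t *: v)) (h *: v) - f (x + t *: v))).
  apply: funext => h /=; congr (_ *: (f _ - _)).
  by rewrite [h%:A]mulr1 scalerDl addrCA addrA.
apply: DeriveDef.
  by rewrite /derivable e.
by rewrite /derive e; exact: hv.
Qed.

Lemma descent (f : 'rV[R]_d -> R) (g : 'rV[R]_d -> 'rV[R]_d) (L : R) x y :
  has_gradient f g ->
  (forall x y, enorm (g x - g y) <= L * enorm (x - y)) ->
  f y <= f x + dotv (g x) (y - x) + L / 2 * sqnorm (y - x).
Proof.
move=> hg hL; set v := y - x; set c := dotv (g x) v; set k := L / 2 * sqnorm v.
pose psi := fun s : R => f (x + s *: v) - c * s - k * s ^+ 2.
have dpsi : forall s : R, is_derive s (1:R) psi (dotv (g (x + s *: v)) v - c - k * (2 * s)).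
  move=> s.
  have h1 := line_derive x v s hg.
  have h2 : is_derive s (1:R) (c \*: (@id R)) (c *: 1) by apply: is_deriveZ.
  have h3 : is_derive s (1:R) (k \*: ((@id R) ^+ 2)) (k *: ((2%:R * s ^+ 1) *: 1)).
    by apply: is_deriveZ; apply: is_deriveX.
  have h4 := is_deriveB (is_deriveB h1 h2) h3.
  have -> : psi = ((fun s : R => f (x + s *: v)) - c \*: (@id R)) - k \*: ((@id R) ^+ 2).
    by apply: funext => r; rewrite /psi /= /GRing.scale /=.
  apply: (is_derive_eq h4).
  by rewrite [c%:A]mulr1 [(2 * s ^+ 1)%:A]mulr1 expr1.
have hle : psi 1 <= psi 0.
  apply: (@ler0_derive1_le_cc R psi 0 1).
  - by move=> s _; by case: (dpsi s).
  - move=> s; rewrite in_itv /= => /andP[s0 s1].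
    have ds := dpsi s; rewrite derive1E derive_val.
    have e1 : dotv (g (x + s *: v)) v - c = dotv (g (x + s *: v) - g x) v by rewrite dotvBl.
    rewrite e1.
    have h1 := CS (g (x + s *: v) - g x) v.
    have h2 := hL (x + s *: v) x.
    have ex : x + s *: v - x = s *: v by rewrite addrC addKr.
    rewrite ex enormZ (ger0_norm (ltW s0)) in h2.
    have h3 : enorm (g (x + s *: v) - g x) * enorm v <= L * s * enorm v * enorm v.
      by rewrite -(mulrA L s); exact: (ler_wpM2r (enorm_ge0 v) h2).
    have h4 : enorm v * enorm v = sqnorm v by rewrite -expr2 enorm_sq.
    rewrite /k; rewrite -mulrA h4 in h3; lra.
  - apply: derivable_within_continuous => s _; by case: (dpsi s).
  - by rewrite in_itv /= ler01 lexx.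
  - by rewrite in_itv /= ler01 lexx.
  - exact: ler01.
have ey : x + v = y by rewrite /v addrC subrK.
move: hle; rewrite /psi scale1r scale0r addr0 ey expr1n expr0n /=; lra.
Qed.

End Descent.


Section Mono.
Local Open Scope ereal_scope.
Context (dT : measure_display) (T : measurableType dT) (R : realType).
Lemma int_mono (mu : {measure set T -> \bar R}) (F G : T -> \bar R) :
  (forall x, F x <= G x) -> \int[mu]_x F x <= \int[mu]_x G x.
Proof.
move=> FG; rewrite /integral.
have FG' : {in setT, forall x, (F \_ setT) x <= (G \_ setT) x}.
  by move=> x _; rewrite /patch /= in_setT.
apply: leeB.
  apply: ge_ereal_sup => _ [h /= hF <-]; apply: ereal_sup_ubound; exists h => //= x.
  exact: (le_trans (hF x) (funepos_le FG' (in_setT x))).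
apply: ge_ereal_sup => _ [h /= hF <-]; apply: ereal_sup_ubound; exists h => //= x.
exact: (le_trans (hF x) (funeneg_le FG' (in_setT x))).
Qed.
End Mono.

Section Prob.
Context (dT : measure_display) (T : measurableType dT) (R : realType)
  (P : probability T R).

Definition Int (f : T -> R) := P.-integrable setT (EFin \o f).
Definition Ri (f : T -> R) := \int[P]_(x in setT) f x.

Lemma Int_cst c : Int (fun _ => c).
Proof. exact: (finite_measure_integrable_cst P c measurableT). Qed.

Lemma Ri_cst c : Ri (fun _ => c) = c.
Proof.
rewrite /Ri Rintegral_cst //.
have h : fine (P setT) = 1.
  by have := probability_setT P; rewrite /= => ->.
by rewrite h mulr1.
Qed.

Lemma Int_eqE (F G : T -> \bar R) : (forall x, F x = G x) ->
  P.-integrable setT F -> P.-integrable setT G.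
Proof. by move=> e; apply: (eq_integrable measurableT F G) => x _; rewrite e. Qed.

Lemma Int_add f g : Int f -> Int g -> Int (fun x => f x + g x).
Proof.
move=> hf hg; apply: (Int_eqE _ (integrableD measurableT hf hg)) => x.
by rewrite /= EFinD.
Qed.

Lemma Int_scale c f : Int f -> Int (fun x => c * f x).
Proof.
move=> hf; apply: (Int_eqE _ (integrableZl measurableT c hf)) => x.
by rewrite /= EFinM.
Qed.

Lemma Int_opp f : Int f -> Int (fun x => - f x).
Proof.
move=> hf; apply: (Int_eqE _ (Int_scale (-1) hf)) => x.
by rewrite /= mulN1r.
Qed.

Lemma Int_sub f g : Int f -> Int g -> Int (fun x => f x - g x).
Proof. by move=> hf hg; apply: Int_add => //; exact: Int_opp. Qed.

Lemma Int_sum (I : Type) (s : seq I) (F : I -> T -> R) :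
  (forall i, Int (F i)) -> Int (fun x => \sum_(i <- s) F i x).
Proof.
move=> hF; elim: s => [|i s ih].
  by apply: (Int_eqE _ (Int_cst 0)) => x /=; rewrite big_nil.
by apply: (Int_eqE _ (Int_add (hF i) ih)) => x /=; rewrite big_cons.
Qed.

Lemma Ri_add f g : Int f -> Int g -> Ri (fun x => f x + g x) = Ri f + Ri g.
Proof. by move=> hf hg; rewrite /Ri RintegralD. Qed.

Lemma Ri_scale c f : Int f -> Ri (fun x => c * f x) = c * Ri f.
Proof. by move=> hf; rewrite /Ri RintegralZl. Qed.

Lemma Ri_sub f g : Int f -> Int g -> Ri (fun x => f x - g x) = Ri f - Ri g.
Proof. by move=> hf hg; rewrite /Ri RintegralB. Qed.

Lemma Ri_sum (I : Type) (s : seq I) (F : I -> T -> R) :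
  (forall i, Int (F i)) -> Ri (fun x => \sum_(i <- s) F i x) = \sum_(i <- s) Ri (F i).
Proof.
move=> hF; elim: s => [|i s ih].
  rewrite big_nil (_ : (fun x => _) = (fun _ => 0)); first exact: Ri_cst.
  by apply: funext => x; rewrite big_nil.
rewrite big_cons -ih -Ri_add //; last exact: Int_sum.
by congr Ri; apply: funext => x; rewrite big_cons.
Qed.

Lemma Ri_le f g : Int f -> Int g -> (forall x, f x <= g x) -> Ri f <= Ri g.
Proof. by move=> hf hg fg; apply: le_Rintegral. Qed.

Lemma Ri_E f : Int f -> (\int[P]_x (f x)%:E = (Ri f)%:E)%E.
Proof. by move=> hf; rewrite /Ri /Rintegral fineK //; exact: integrable_fin_num. Qed.

Lemma Int_ge0_bound (f : T -> R) (B : R) : measurable_fun setT f -> (forall x, 0 <= f x) ->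
  (\int[P]_x (f x)%:E <= B%:E)%E -> Int f /\ Ri f <= B.
Proof.
move=> mf f0 hB.
have hI : Int f.
  apply/integrableP; split; first exact/measurable_realfun.measurable_EFinP.
  under eq_integral do rewrite /= ger0_norm ?f0 //.
  exact: (le_lt_trans hB (ltry B)).
split => //; by rewrite -lee_fin -Ri_E.
Qed.

Lemma Int_eq (f g : T -> R) : (forall x, f x = g x) -> Int f -> Int g.
Proof. by move=> e; apply: Int_eqE => x /=; rewrite e. Qed.

Lemma Ri_eq (f g : T -> R) : (forall x, f x = g x) -> Ri f = Ri g.
Proof. by move=> e; congr Ri; apply: funext. Qed.

Lemma meas_of_Int f : Int f -> measurable_fun setT f.
Proof. by move=> /(measurable_int P) /measurable_realfun.measurable_EFinP. Qed.

Variable d : nat.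

Lemma meas_sqnorm (V : T -> 'rV[R]_d) : (forall j, Int (fun x => V x ord0 j)) ->
  measurable_fun setT (fun x => sqnorm (V x)).
Proof.
move=> hV; rewrite /sqnorm /dotv.
apply: measurable_fun_approximation.measurable_sum => j; apply: measurable_realfun.measurable_funM; exact: meas_of_Int.
Qed.

Lemma gbv (D : T -> 'rV[R]_d) (M : 'rV[R]_d) (B a : R) (w : 'rV[R]_d) :
  (forall j, Int (fun x => D x ord0 j)) ->
  (forall j, Ri (fun x => D x ord0 j) = M ord0 j) ->
  (\int[P]_x (sqnorm (D x - M))%:E <= B%:E)%E ->
  Int (fun x => sqnorm (a *: D x + w)) /\
  Ri (fun x => sqnorm (a *: D x + w)) <= sqnorm (a *: M + w) + a ^+ 2 * B.
Proof.
move=> hD hM hB; set z := a *: M + w.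
have cV : forall j, Int (fun x => (D x - M) ord0 j).
  move=> j; apply: (Int_eq (f := fun x => D x ord0 j - M ord0 j)).
    by move=> x; rewrite !mxE.
  by apply: Int_sub => //; exact: Int_cst.
have [IV2 RV2] := Int_ge0_bound (meas_sqnorm cV) (fun x => sqnorm_ge0 _) hB.
have IL : Int (fun x => dotv (D x - M) z).
  rewrite /dotv; apply: Int_sum => j; exact: (Int_eq (fun x => mulrC _ _) (Int_scale (z ord0 j) (cV j))).
have RL : Ri (fun x => dotv (D x - M) z) = 0.
  rewrite /dotv Ri_sum; last first.
    move=> j; exact: (Int_eq (fun x => mulrC _ _) (Int_scale (z ord0 j) (cV j))).
  apply: big1 => j _.
  rewrite (Ri_eq (g := fun x => z ord0 j * (D x ord0 j - M ord0 j))); last first.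
    by move=> x; rewrite !mxE mulrC.
  rewrite Ri_scale; last by apply: Int_sub => //; exact: Int_cst.
  rewrite Ri_sub; [by rewrite hM Ri_cst subrr mulr0 | exact: hD | exact: Int_cst].
have e : forall x, sqnorm (a *: D x + w) =
    (a ^+ 2 * sqnorm (D x - M) + (2 * a) * dotv (D x - M) z) + sqnorm z.
  move=> x; have -> : a *: D x + w = a *: (D x - M) + z.
    by rewrite /z scalerBr addrA subrK.
  rewrite [LHS]sqnormD sqnormZ dotvZl; ring.
have I1 : Int (fun x => a ^+ 2 * sqnorm (D x - M) + (2 * a) * dotv (D x - M) z).
  by apply: Int_add; apply: Int_scale.
split.
  apply: (Int_eq (fun x => esym (e x))); apply: Int_add => //; exact: Int_cst.
rewrite (Ri_eq e) Ri_add //; last exact: Int_cst.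
rewrite Ri_add; [|exact: Int_scale|exact: Int_scale].
rewrite !Ri_scale // RL Ri_cst mulr0 addr0 addrC lerD2l.
by rewrite ler_wpM2l ?sqr_ge0.
Qed.

Definition mean (d : nat) (D : T -> 'rV[R]_d) : 'rV[R]_d := \row_j Ri (fun x => D x ord0 j).
End Prob.


Section Grad.
Context (R : realType) (d n : nat).
Lemma grad_avg (fs : 'I_n -> 'rV[R]_d -> R) (gf : 'I_n -> 'rV[R]_d -> 'rV[R]_d) :
  (forall i, has_gradient (fs i) (gf i)) ->
  has_gradient (fun x => n%:R^-1 * \sum_(i < n) fs i x)
               (fun x => n%:R^-1 *: \sum_(i < n) gf i x).
Proof.
move=> hg x v.
have h1 : is_derive x v (\sum_(i < n) fs i) (\sum_(i < n) dotv (gf i x) v).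
  by apply: is_derive_sum => i; exact: hg.
have h2 := is_deriveZ (n%:R^-1) h1.
have e : (n%:R^-1 \*: \sum_(i < n) fs i) = (fun x => n%:R^-1 * \sum_(i < n) fs i x).
  by apply: funext => y /=; rewrite fct_sumE.
rewrite -e; apply: (is_derive_eq h2).
by rewrite dotvZl dotv_suml.
Qed.
End Grad.

Section OneStep.
Context (R : realType) (d n : nat) (dT : measure_display) (T : measurableType dT).
Variables (fs : 'I_n -> 'rV[R]_d -> R) (gf : 'I_n -> 'rV[R]_d -> 'rV[R]_d)
  (Ls : 'I_n -> R) (L : R) (xstar : 'rV[R]_d) (mu : R) (Pk : probability T R)
  (Ck : 'I_n -> T -> 'rV[R]_d -> 'rV[R]_d)
  (eta omega omega_av gamma lambda : R).
Local Notation f := (fun x => n%:R^-1 * \sum_(i < n) fs i x).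
Local Notation gradf := (fun x => n%:R^-1 *: \sum_(i < n) gf i x).
Local Notation Ltilde := (Num.sqrt (n%:R^-1 * \sum_(i < n) Ls i ^+ 2)).
Local Notation r := ((1 - lambda + lambda * eta) ^+ 2 + lambda ^+ 2 * omega).
Local Notation r_av := (eta ^+ 2 + omega_av).
Local Notation sstar := (Num.sqrt ((1 + r) / (2 * r)) - 1).
Local Notation thetastar := (sstar * (1 + sstar) * r / r_av).
Local Notation rho := (Num.max (1 - gamma * mu) ((r + 1) / 2)).
Hypotheses (n0 : (0 < n)%N) (hsm : forall i, smooth_with (fs i) (gf i) (Ls i))
  (hL : forall x y, enorm (gradf x - gradf y) <= L * enorm (x - y))
  (hmin : forall x, f xstar <= f x) (hmu : 0 < mu)
  (hPL : forall x, 2 * mu * (f x - f xstar) <= sqnorm (gradf x))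
  (heta0 : 0 <= eta) (hom0 : 0 <= omega) (hoa0 : 0 <= omega_av)
  (hcl : forall i, in_class Pk (Ck i) eta omega)
  (hav : forall (xs : 'I_n -> 'rV[R]_d),
     (\int[Pk]_xi
        (sqnorm (n%:R^-1 *: \sum_(i < n)
                   (Ck i xi (xs i) - Emean Pk (Ck i) (xs i))))%:E
      <= (omega_av / n%:R * \sum_(i < n) sqnorm (xs i))%:E)%E)
  (hl0 : 0 < lambda) (hl1 : lambda <= 1)
  (hr0 : 0 < r) (hra0 : 0 < r_av) (hr1 : r < 1) (hg0 : 0 < gamma)
  (hg : gamma <= (L + Ltilde * Num.sqrt (r_av / r) / sstar)^-1).

Definition PsiA (x : 'rV[R]_d) (h : 'I_n -> 'rV[R]_d) :=
  f x - f xstar + gamma / (2 * thetastar) * (n%:R^-1 * \sum_(i < n) sqnorm (gf i x - h i)).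

Lemma sfacts (q : R) : 0 < q -> q < 1 ->
  0 < Num.sqrt ((1 + q) / (2 * q)) - 1 /\
  (1 + (Num.sqrt ((1 + q) / (2 * q)) - 1)) ^+ 2 = (1 + q) / (2 * q).
Proof.
move=> q0 q1; split.
  rewrite subr_gt0 -{1}sqrtr1 ltr_sqrt; last by apply: divr_gt0; lra.
  by rewrite ltr_pdivlMr ?mul1r; lra.
by rewrite addrC subrK sqr_sqrtr // divr_ge0 //; lra.
Qed.

Lemma coef_le (Lc a g : R) : 0 < g -> 0 <= a -> 0 <= Lc -> g <= (Lc + a)^-1 ->
  g * Lc + g ^+ 2 * a ^+ 2 <= 1.
Proof.
move=> g0 a0 L0 hgl.
have hpos : 0 < Lc + a.
  rewrite ltNge; apply/negP => hle.
  have : (Lc + a)^-1 <= 0 by rewrite invr_le0.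
  move=> h; have := le_trans hgl h; rewrite leNgt g0 //.
have h1 : g * (Lc + a) <= 1.
  by rewrite -(ler_pM2r hpos) mulVf ?gt_eqF // in hgl.
have ga0 : 0 <= g * a by apply: mulr_ge0 => //; exact: ltW.
have gL0 : 0 <= g * Lc by apply: mulr_ge0 => //; exact: ltW.
have h2 : (g * a) ^+ 2 <= g * a by rewrite expr2 ler_piMl //; lra.
rewrite -exprMn; lra.
Qed.

Lemma ea_lemma (ga s rr rav LL : R) : 0 < s -> 0 < rr -> 0 < rav ->
  ga / (2 * (s * (1 + s) * rr / rav)) * (1 + s^-1) * LL =
  ga / 2 * (LL * (rav / rr) * s^-1 ^+ 2).
Proof.
move=> s0 r0 ra0; field.
have h1 : 0 < 1 + s by lra.
by rewrite !gt_eqF.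
Qed.

Lemma pointwise (x : 'rV[R]_d) (h : 'I_n -> 'rV[R]_d) (hb : 'rV[R]_d) (dd : 'I_n -> 'rV[R]_d) :
  hb = n%:R^-1 *: \sum_(i < n) h i ->
  PsiA (x - gamma *: (hb + n%:R^-1 *: \sum_(i < n) dd i)) (fun i => h i + lambda *: dd i)
  <= f x - f xstar - gamma / 2 * sqnorm (gradf x)
     + gamma / 2 * sqnorm (1 *: (n%:R^-1 *: \sum_(i < n) dd i) + - (n%:R^-1 *: \sum_(i < n) (gf i x - h i)))
     + gamma / (2 * thetastar) * (1 + sstar) *
         (n%:R^-1 * \sum_(i < n) sqnorm ((- lambda) *: dd i + (gf i x - h i))).
Proof.
move=> ehb.
set avd := n%:R^-1 *: \sum_(i < n) dd i.
set g := hb + avd.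
set x' := x - gamma *: g.
have [s0 s2] := sfacts hr0 hr1.
have th0 : 0 < thetastar by apply: divr_gt0 => //; apply: mulr_gt0 => //; apply: mulr_gt0 => //; lra.
have ex : x' - x = (- gamma) *: g by rewrite /x' addrAC subrr add0r scaleNr.
have hA : f x' <= f x - gamma * dotv (gradf x) g + L / 2 * (gamma ^+ 2 * sqnorm g).
  have := descent x x' (grad_avg (fun i => proj1 (hsm i))) hL.
  by rewrite ex dotvZr sqnormZ sqrrN mulNr.
have hB : 2 * dotv (gradf x) g = sqnorm (gradf x) + sqnorm g - sqnorm (g - gradf x).
  by rewrite sqnormB dotvC; ring.
have hC : g - gradf x = 1 *: avd + - (n%:R^-1 *: \sum_(i < n) (gf i x - h i)).
  by rewrite scale1r sumrB scalerBr -ehb /g opprB [hb + avd]addrC addrA.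
have hD : forall i, sqnorm (gf i x' - (h i + lambda *: dd i)) <=
    (1 + sstar) * sqnorm ((- lambda) *: dd i + (gf i x - h i))
    + (1 + sstar^-1) * (Ls i ^+ 2 * (gamma ^+ 2 * sqnorm g)).
  move=> i.
  have e : gf i x' - (h i + lambda *: dd i) =
      ((- lambda) *: dd i + (gf i x - h i)) + (gf i x' - gf i x).
    by apply/rowP => j; rewrite !mxE; ring.
  rewrite e; apply: (le_trans (young _ _ s0)).
  rewrite lerD2l ler_wpM2l //; first by apply: addr_ge0 => //; rewrite invr_ge0 ltW.
  have hl := proj2 (hsm i) x' x.
  have eg : gamma ^+ 2 * sqnorm g = sqnorm (x' - x) by rewrite ex sqnormZ sqrrN.
  rewrite eg -!enorm_sq -exprMn.
  rewrite ler_pXn2r ?nnegrE ?enorm_ge0 //; last exact: le_trans (enorm_ge0 _) hl.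
set Lt2 := n%:R^-1 * \sum_(i < n) Ls i ^+ 2.
set Ysum := n%:R^-1 * \sum_(i < n) sqnorm (- lambda *: dd i + (gf i x - h i)).
set G2 := sqnorm g.
have hE : n%:R^-1 * \sum_(i < n) sqnorm (gf i x' - (h i + lambda *: dd i)) <=
    (1 + sstar) * Ysum + (1 + sstar^-1) * (gamma ^+ 2 * G2) * Lt2.
  apply: le_trans.
    apply: ler_wpM2l; first by rewrite invr_ge0 ler0n.
    apply: ler_sum => i _; exact: hD i.
  rewrite big_split /= -mulr_sumr -mulr_sumr -mulr_suml /Ysum /Lt2 /G2.
  by rewrite le_eqVlt; apply/orP; left; apply/eqP; ring.
set a := Ltilde * Num.sqrt (r_av / r) / sstar.
have Lt20 : 0 <= Lt2 by apply: mulr_ge0; [rewrite invr_ge0 ler0n | apply: sumr_ge0 => i _; exact: sqr_ge0].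
have ea : gamma / (2 * thetastar) * (1 + sstar^-1) * Lt2 = gamma / 2 * a ^+ 2.
  rewrite /a !exprMn sqr_sqrtr // sqr_sqrtr ?divr_ge0 ?ltW //.
  by apply: ea_lemma => //; lra.
have hcoef : (gamma * L + gamma ^+ 2 * a ^+ 2 - 1) * G2 <= 0.
  have [L0|L0] := leP 0 L.
    have a0 : 0 <= a by apply: divr_ge0; [apply: mulr_ge0; exact: sqrtr_ge0|exact: ltW].
    have := coef_le hg0 a0 L0 hg.
    move=> hle; apply: mulr_le0_ge0; [lra | exact: sqnorm_ge0].
  have : enorm g = 0.
    have := hL g 0; rewrite subr0 => hh.
    have h0 := le_trans (enorm_ge0 _) hh.
    rewrite nmulr_rge0 // in h0.
    by apply/eqP; rewrite eq_le h0 enorm_ge0.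
  move=> eg0; rewrite /G2 -enorm_sq eg0 expr0n /= mulr0 //.
set c := gamma / (2 * thetastar).
have c0 : 0 <= c by apply: divr_ge0; [exact: ltW | apply: mulr_ge0 => //; exact: ltW].
have hE' := ler_wpM2l c0 hE.
have e2 : c * ((1 + sstar) * Ysum + (1 + sstar^-1) * (gamma ^+ 2 * G2) * Lt2)
   = c * (1 + sstar) * Ysum + gamma / 2 * a ^+ 2 * (gamma ^+ 2 * G2).
  by rewrite -ea /c; ring.
rewrite e2 in hE'.
rewrite /PsiA -hC -/c.
move: hA hB hE' hcoef.
set F' := n%:R^-1 * \sum_(i < n) fs i x'.
set F := n%:R^-1 * \sum_(i < n) fs i x.
set Fs := n%:R^-1 * \sum_(i < n) fs i xstar.
set Dt := dotv _ g.
set NN := sqnorm (n%:R^-1 *: \sum_(i < n) gf i x).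
set E := sqnorm (g - _).
set S' := n%:R^-1 * \sum_(i < n) sqnorm (gf i x' - (h i + lambda *: dd i)).
rewrite -/G2 => hA hB hE' hcoef.
have hB' : gamma * Dt = gamma / 2 * (NN + G2 - E) by rewrite -hB; field.
have hc2 : gamma / 2 * ((gamma * L + gamma ^+ 2 * a ^+ 2 - 1) * G2) <= 0.
  by rewrite pmulr_rle0 // divr_gt0.
have e3 : gamma / 2 * ((gamma * L + gamma ^+ 2 * a ^+ 2 - 1) * G2) =
  gamma / 2 * a ^+ 2 * (gamma ^+ 2 * G2) + L / 2 * (gamma ^+ 2 * G2) - gamma / 2 * G2 by ring.
rewrite e3 in hc2.
lra.
Qed.
Lemma fin_arith (ga s rr rav : R) : 0 < s -> 0 < rr -> 0 < rav ->
  (1 + s) ^+ 2 = (1 + rr) / (2 * rr) ->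
  ga / 2 * rav + ga / (2 * (s * (1 + s) * rr / rav)) * (1 + s) * rr =
  ga / (2 * (s * (1 + s) * rr / rav)) * ((rr + 1) / 2).
Proof.
move=> s0 r0 ra0 hs.
have -> : (rr + 1) / 2 = rr * (1 + s) ^+ 2 by rewrite hs; field; rewrite gt_eqF.
have h1 : 0 < 1 + s by lra.
by field; rewrite !gt_eqF.
Qed.

Lemma sq_le (u m : 'rV[R]_d) (e : R) : 0 <= e -> enorm (m - u) <= e * enorm u ->
  sqnorm (m - u) <= e ^+ 2 * sqnorm u.
Proof.
move=> e0 h; rewrite -!enorm_sq -exprMn ler_pXn2r ?nnegrE ?enorm_ge0 //.
exact: mulr_ge0 (enorm_ge0 _).
Qed.

Lemma contr_le (u m : 'rV[R]_d) : enorm (m - u) <= eta * enorm u ->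
  sqnorm ((- lambda) *: m + u) <= (1 - lambda + lambda * eta) ^+ 2 * sqnorm u.
Proof.
move=> h.
have e : (- lambda) *: m + u = (1 - lambda) *: u + lambda *: (u - m).
  by apply/rowP => j; rewrite !mxE; ring.
have e2 : enorm (u - m) = enorm (m - u).
  by rewrite /enorm -sqnormN opprB.
have h1 : enorm ((- lambda) *: m + u) <= (1 - lambda + lambda * eta) * enorm u.
  rewrite e; apply: le_trans (enormD _ _) _.
  rewrite !enormZ e2 (ger0_norm (ltW hl0)) ger0_norm ?subr_ge0 //.
  have := ler_wpM2l (ltW hl0) h; lra.
rewrite -!enorm_sq -exprMn ler_pXn2r ?nnegrE ?enorm_ge0 //.
apply: le_trans (enorm_ge0 _) h1.
Qed.

Lemma one_step (x : 'rV[R]_d) (h : 'I_n -> 'rV[R]_d) (hb : 'rV[R]_d) (c : R) :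
  hb = n%:R^-1 *: \sum_(i < n) h i -> 0 <= c ->
  (\int[Pk]_xi (c * PsiA (x - gamma *: (hb + n%:R^-1 *: \sum_(i < n) Ck i xi (gf i x - h i)))
                 (fun i => h i + lambda *: Ck i xi (gf i x - h i)))%:E
   <= (c * (rho * PsiA x h))%:E)%E.
Proof.
move=> ehb c0.
set u := fun i => gf i x - h i.
have [s0 s2] := sfacts hr0 hr1.
have th0 : 0 < thetastar by apply: divr_gt0 => //; apply: mulr_gt0 => //; apply: mulr_gt0 => //; lra.
set A0 := f x - f xstar - gamma / 2 * sqnorm (gradf x).
set X := fun xi => sqnorm (1 *: (n%:R^-1 *: \sum_(i < n) Ck i xi (u i)) + - (n%:R^-1 *: \sum_(i < n) u i)).
set Y := fun i xi => sqnorm ((- lambda) *: Ck i xi (u i) + u i).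
set K := gamma / (2 * thetastar) * (1 + sstar).
set Q := fun xi => A0 + gamma / 2 * X xi + K * (n%:R^-1 * \sum_(i < n) Y i xi).
have hpt : forall xi, PsiA (x - gamma *: (hb + n%:R^-1 *: \sum_(i < n) Ck i xi (gf i x - h i)))
                 (fun i => h i + lambda *: Ck i xi (gf i x - h i)) <= Q xi.
  by move=> xi; exact: (pointwise x (fun i => Ck i xi (u i)) ehb).
have hYi : forall i, Int Pk (Y i) /\ Ri Pk (Y i) <=
    sqnorm ((- lambda) *: Emean Pk (Ck i) (u i) + u i) + (- lambda) ^+ 2 * (omega * sqnorm (u i)).
  move=> i; have [hi1 [hi2 hi3]] := hcl i (u i).
  by apply: gbv => // j; rewrite /Emean mxE.
set M := n%:R^-1 *: \sum_(i < n) Emean Pk (Ck i) (u i).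
have hX : Int Pk X /\ Ri Pk X <=
    sqnorm (1 *: M + - (n%:R^-1 *: \sum_(i < n) u i)) + 1 ^+ 2 * (omega_av / n%:R * \sum_(i < n) sqnorm (u i)).
  apply: (gbv (D := fun xi => n%:R^-1 *: \sum_(i < n) Ck i xi (u i))).
  - move=> j; apply: (Int_eq (f := fun xi => n%:R^-1 * \sum_(i < n) Ck i xi (u i) ord0 j)).
      by move=> xi; rewrite mxE summxE.
    apply: Int_scale; apply: Int_sum => i; exact: (proj1 (hcl i (u i)) j).
  - move=> j; rewrite (@Ri_eq _ _ _ Pk _ (fun xi => n%:R^-1 * \sum_(i < n) Ck i xi (u i) ord0 j)); last first.
      by move=> xi; rewrite mxE summxE.
    rewrite Ri_scale; last by apply: Int_sum => i; exact: (proj1 (hcl i (u i)) j).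
    rewrite Ri_sum; last by move=> i; exact: (proj1 (hcl i (u i)) j).
    by rewrite /M mxE summxE; congr (_ * _); apply: eq_bigr => i _; rewrite /Emean mxE.
  - under eq_integral => xi _ do rewrite /= -scalerBr -sumrB.
    exact: hav.
have IQ : Int Pk Q.
  rewrite /Q; apply: Int_add; first apply: Int_add.
  - exact: Int_cst.
  - by apply: Int_scale; case: hX.
  - by apply: Int_scale; apply: Int_scale; apply: Int_sum => i; case: (hYi i).
have RQ : Ri Pk Q = A0 + gamma / 2 * Ri Pk X + K * (n%:R^-1 * \sum_(i < n) Ri Pk (Y i)).
  rewrite /Q Ri_add; last first.
  - by apply: Int_scale; apply: Int_scale; apply: Int_sum => i; case: (hYi i).
  - by apply: Int_add; [exact: Int_cst | apply: Int_scale; case: hX].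
  rewrite Ri_add; [|exact: Int_cst | by apply: Int_scale; case: hX].
  rewrite Ri_cst Ri_scale; last by case: hX.
  rewrite Ri_scale; last by apply: Int_scale; apply: Int_sum => i; case: (hYi i).
  rewrite Ri_scale; last by apply: Int_sum => i; case: (hYi i).
  have -> : Ri Pk (fun x => \sum_(i < n) Y i x) = \sum_(i < n) Ri Pk (Y i).
    by apply: Ri_sum => i; case: (hYi i).
  by [].
apply: (le_trans (@int_mono _ _ _ Pk _ (fun xi => (c * Q xi)%:E) _)).
  move=> xi /=; rewrite lee_fin; apply: ler_wpM2l => //; exact: hpt.
rewrite (Ri_E (Int_scale c IQ)) lee_fin Ri_scale //; apply: ler_wpM2l => //.
set G := n%:R^-1 * \sum_(i < n) sqnorm (u i).
have n0' : (0 : R) < n%:R by rewrite ltr0n.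
have G0 : 0 <= G by apply: mulr_ge0; [rewrite invr_ge0 ltW | apply: sumr_ge0 => i _; exact: sqnorm_ge0].
have hXb : sqnorm (1 *: M + - (n%:R^-1 *: \sum_(i < n) u i)) <= eta ^+ 2 * G.
  rewrite scale1r /M -scalerBr -sumrB.
  apply: le_trans (jensen _ n0) _.
  rewrite /G mulrCA; apply: ler_wpM2l; first by rewrite invr_ge0 ltW.
  rewrite mulr_sumr; apply: ler_sum => i _.
  exact: sq_le heta0 (proj1 (proj2 (hcl i (u i)))).
have hYb : \sum_(i < n) Ri Pk (Y i) <= r * \sum_(i < n) sqnorm (u i).
  rewrite mulr_sumr; apply: ler_sum => i _.
  apply: le_trans (proj2 (hYi i)) _.
  have := contr_le (proj1 (proj2 (hcl i (u i)))).
  rewrite sqrrN; lra.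
have hX2 : Ri Pk X <= r_av * G.
  apply: le_trans (proj2 hX) _.
  have -> : 1 ^+ 2 * (omega_av / n%:R * \sum_(i < n) sqnorm (u i)) = omega_av * G.
    by rewrite /G expr1n mul1r mulrA.
  lra.
have hYb' : n%:R^-1 * \sum_(i < n) Ri Pk (Y i) <= r * G.
  rewrite /G mulrCA; apply: ler_wpM2l => //; by rewrite invr_ge0 ltW.
have g20 : 0 <= gamma / 2 by apply: divr_ge0; [exact: ltW|].
set ct := gamma / (2 * thetastar).
have ct0 : 0 <= ct by apply: divr_ge0; [exact: ltW | apply: mulr_ge0 => //; exact: ltW].
have K0 : 0 <= K by apply: mulr_ge0 => //; lra.
have h1 : gamma / 2 * Ri Pk X <= gamma / 2 * (r_av * G) by apply: ler_wpM2l.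
have h2 : K * (n%:R^-1 * \sum_(i < n) Ri Pk (Y i)) <= K * (r * G) by apply: ler_wpM2l.
have fa := fin_arith gamma s0 hr0 hra0 s2.
have h3 : gamma / 2 * (r_av * G) + K * (r * G) = ct * ((r + 1) / 2) * G.
  by rewrite -fa /K /ct; ring.
set D := f x - f xstar.
have D0 : 0 <= D by rewrite /D subr_ge0.
have hA0 : A0 <= (1 - gamma * mu) * D.
  have := hPL x; rewrite -/D => hp.
  have := ler_wpM2l g20 hp; rewrite /A0 -/D; lra.
have hr1' : 1 - gamma * mu <= rho by rewrite le_max lexx.
have hr2' : (r + 1) / 2 <= rho by rewrite le_max lexx orbT.
have h4 : (1 - gamma * mu) * D <= rho * D by apply: ler_wpM2r.
have h5 : (r + 1) / 2 * (ct * G) <= rho * (ct * G) by apply: ler_wpM2r => //; exact: mulr_ge0.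
rewrite RQ /PsiA -/D -/ct -/G.
have e5 : ct * ((r + 1) / 2) * G = (r + 1) / 2 * (ct * G) by ring.
lra.
Qed.
End OneStep.


Section DianaFacts.
Context (T : Type) (R : realType) (d n : nat)
  (gf : 'I_n -> 'rV[R]_d -> 'rV[R]_d)
  (C : 'I_n -> nat -> T -> 'rV[R]_d -> 'rV[R]_d)
  (gamma lambda : R) (x0 : 'rV[R]_d) (h0 : 'I_n -> 'rV[R]_d).

Lemma diana_dep (s s' : nat -> T) t : (forall m, (m < t)%N -> s m = s' m) ->
  diana gf C gamma lambda x0 h0 s t = diana gf C gamma lambda x0 h0 s' t.
Proof.
elim: t => [//|t IH] hs /=.
rewrite IH; last by move=> m hm; apply: hs; exact: ltnW.
by rewrite hs.
Qed.

Lemma diana_hb (s : nat -> T) t :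
  (diana gf C gamma lambda x0 h0 s t).2 =
  n%:R^-1 *: \sum_(i < n) (diana gf C gamma lambda x0 h0 s t).1.2 i.
Proof.
elim: t => [//|t] /=.
case: (diana gf C gamma lambda x0 h0 s t) => [[x h] hb] /= ->.
rewrite big_split /= -scaler_sumr scalerDr !scalerA mulrC.
by [].
Qed.
End DianaFacts.

Section Iexp.
Context (dT : measure_display) (T : measurableType dT) (R : realType)
  (P : nat -> probability T R).
Lemma iexp_mono k (F G : (nat -> T) -> \bar R) s :
  (forall s, (F s <= G s)%E) -> (iexp P k F s <= iexp P k G s)%E.
Proof.
elim: k F G s => [|k IH] F G s hFG /=; first exact: hFG.
apply: IH => s'; apply: int_mono => xi; exact: hFG.
Qed.
End Iexp.

Unset Implicit Arguments. Set Strict Implicit. Set Printing Implicit Defensive.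

Theorem theorem4 (R : realType) (d n : nat)
  (dT : measure_display) (T : measurableType dT)
  (fs : 'I_n -> 'rV[R]_d -> R) (gf : 'I_n -> 'rV[R]_d -> 'rV[R]_d)
  (Ls : 'I_n -> R) (L : R) (xstar : 'rV[R]_d) (mu : R)
  (P : nat -> probability T R)
  (C : 'I_n -> nat -> T -> 'rV[R]_d -> 'rV[R]_d)
  (eta omega omega_av gamma lambda : R)
  (x0 : 'rV[R]_d) (h0 : 'I_n -> 'rV[R]_d) :
  (0 < n)%N ->
  (forall i, convex_fun (fs i)) ->
  (forall i, smooth_with (fs i) (gf i) (Ls i)) ->
  let f := fun x => n%:R^-1 * \sum_(i < n) fs i x in
  let gradf := fun x => n%:R^-1 *: \sum_(i < n) gf i x in
  let Ltilde := Num.sqrt (n%:R^-1 * \sum_(i < n) Ls i ^+ 2) in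
  (forall x y, enorm (gradf x - gradf y) <= L * enorm (x - y)) ->
  L <= Ltilde ->
  (forall x, f xstar <= f x) ->
  0 < mu ->
  (forall x, 2 * mu * (f x - f xstar) <= sqnorm (gradf x)) ->
  0 <= eta -> eta < 1 -> 0 <= omega -> 0 <= omega_av -> omega_av <= omega ->
  (forall i t, in_class (P t) (C i t) eta omega) ->
  (forall t (xs : 'I_n -> 'rV[R]_d),
     (\int[P t]_xi
        (sqnorm (n%:R^-1 *: \sum_(i < n)
                   (C i t xi (xs i) - Emean (P t) (C i t) (xs i))))%:E
      <= (omega_av / n%:R * \sum_(i < n) sqnorm (xs i))%:E)%E) ->
  0 < lambda -> lambda <= 1 ->
  let r := (1 - lambda + lambda * eta) ^+ 2 + lambda ^+ 2 * omega in
  let r_av := eta ^+ 2 + omega_av in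
  let sstar := Num.sqrt ((1 + r) / (2 * r)) - 1 in
  let thetastar := sstar * (1 + sstar) * r / r_av in
  0 < r -> 0 < r_av -> r < 1 ->
  0 < gamma ->
  gamma <= (L + Ltilde * Num.sqrt (r_av / r) / sstar)^-1 ->
  let Psi := fun (s : nat -> T) (t : nat) =>
    let: (x, h, _) := diana gf C gamma lambda x0 h0 s t in
    f x - f xstar
    + gamma / (2 * thetastar) * (n%:R^-1 * \sum_(i < n) sqnorm (gf i x - h i)) in
  forall (s : nat -> T) (t : nat),
    (iexp P t (fun s' => (Psi s' t)%:E) s
     <= ((Num.max (1 - gamma * mu) ((r + 1) / 2)) ^+ t * Psi s 0)%:E)%E.

Proof.
move=> n0 hconv hsm f gradf Ltilde hL hLL hmin hmu hPL heta0 heta1 hom0 hoa0 hoa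
  hcl hav hl0 hl1 r r_av sstar thetastar hr0 hra0 hr1 hg0 hg Psi.
set rho := Num.max (1 - gamma * mu) ((r + 1) / 2).
have claim : forall t j s, (iexp P t (fun s' => (rho ^+ j * Psi s' t)%:E) s
    <= (rho ^+ (t + j) * Psi s 0)%:E)%E.
  elim => [|t IH] j s; first by rewrite /= add0n.
  rewrite /=.
  rewrite addSnnS.
  apply: (le_trans _ (IH j.+1 s)).
  apply: iexp_mono => s'.
  case E: (diana gf C gamma lambda x0 h0 s' t) => [[x h] hb].
  have Eu : forall xi, diana gf C gamma lambda x0 h0 (upd s' t xi) t = (x, h, hb).
    move=> xi; rewrite -E; apply: diana_dep => m hm.
    by rewrite /upd (ltn_eqF hm).
  have ehb : hb = n%:R^-1 *: \sum_(i < n) h i.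
    by have := diana_hb gf C gamma lambda x0 h0 s' t; rewrite E.
  have e1 : Psi s' t = f x - f xstar + gamma / (2 * thetastar) * (n%:R^-1 * \sum_(i < n) sqnorm (gf i x - h i)).
    by rewrite /Psi E.
  have e2 : forall xi, Psi (upd s' t xi) t.+1 =
     PsiA fs gf xstar eta omega omega_av gamma lambda (x - gamma *: (hb + n%:R^-1 *: \sum_(i < n) C i t xi (gf i x - h i)))
          (fun i => h i + lambda *: C i t xi (gf i x - h i)).
    by move=> xi; rewrite /Psi /= Eu /upd eqxx.
  under eq_integral => xi _ do rewrite e2.
  rewrite e1 exprS -mulrA mulrCA.
  have c0 : 0 <= rho ^+ j.
    by apply: exprn_ge0; rewrite le_max; apply/orP; right; apply: divr_ge0 => //; rewrite addr_ge0 // ltW.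
  have H := (one_step n0 hsm hL hmin hPL heta0 (fun i => hcl i t) (hav t) hl0 hl1 hr0 hra0 hr1 hg0 hg x ehb c0).
  exact: H.
move=> s t; have := claim t 0 s.
rewrite addn0 expr0.
have -> : (fun s' => (1 * Psi s' t)%:E) = (fun s' => (Psi s' t)%:E).
  by apply: funext => s'; rewrite mul1r.
by [].
Qed.
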